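(* Assume that for each $\ell\in I_{n-1}$ and every $j\in I_n\setminus I_\ell$, $\alpha_jY^{\{\ell\}}<1$ and every $y\in\gamma_\ell\cap\pi_1\cap\cdots\cap\pi_{\ell-1}$ satisfies $\alpha_jy\le 1$. Then $Y^{\{n\}}=(0,\dots,0,a_{nn}^{-1})^T$ is a global attractor.
   Context: Fix $n\ge 2$ and $I_m=\{1,\dots,m\}$. Consider the Lotka–Volterra system $x_i'=b_ix_i(1-\alpha_ix)$, $i\in I_n$, where $b_i>0$, $\alpha_i=(a_{i1},\dots,a_{in})$ with $a_{ii}>0$ and $a_{ij}\ge 0$. Solutions are considered in $\mathbb{R}^n_+$. An equilibrium $x^*\in\mathbb{R}^n_+$ is a global attractor if every solution with $x(0)\in\operatorname{int}\mathbb{R}^n_+$ satisfies $x(t)\to x^*$. $Y^{\{\ell\}}$ denotes the point with $\ell$th coordinate $a_{\ell\ell}^{-1}$ and all other coordinates $0$. $\pi_i=\{x\in\mathbb{R}^n_+:x_i=0\}$ (for $\ell=1$ the empty intersection of $\pi$'s is $\mathbb{R}^n_+$), $\gamma_i=\{x\in\mathbb{R}^n_+:\alpha_ix=1\}$. *)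

(* Defs.v *)
(* classical reals. Indices are 1-based: coordinates 1..n. *)
From Stdlib Require Import Reals Lra Lia.
Open Scope R_scope.

Fixpoint sumN (n : nat) (f : nat -> R) : R :=
  match n with
  | O => 0
  | S m => sumN m f + f (S m)
  end.

Definition alpha (n : nat) (a : nat -> nat -> R) (i : nat) (x : nat -> R) : R :=
  sumN n (fun j => a i j * x j).

Definition Yl (a : nat -> nat -> R) (l : nat) : nat -> R :=
  fun k => if Nat.eqb k l then / a l l else 0.

Definition nonneg_orthant (n : nat) (x : nat -> R) : Prop :=
  forall k, (1 <= k <= n)%nat -> 0 <= x k.

Definition LV_solution (n : nat) (a : nat -> nat -> R) (b : nat -> R)
    (x : R -> nat -> R) : Prop :=
  (forall i, (1 <= i <= n)%nat ->
     forall t, 0 < t ->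
       derivable_pt_lim (fun s => x s i) t
         (b i * x t i * (1 - alpha n a i (x t)))) /\
  (forall i, (1 <= i <= n)%nat ->
     forall eps, 0 < eps -> exists delta, 0 < delta /\
       forall t, 0 <= t < delta -> Rabs (x t i - x 0 i) < eps).

Definition global_attractor (n : nat) (a : nat -> nat -> R) (b : nat -> R)
    (xs : nat -> R) : Prop :=
  nonneg_orthant n xs /\
  forall x : R -> nat -> R,
    LV_solution n a b x ->
    (forall i, (1 <= i <= n)%nat -> 0 < x 0 i) ->
    forall i, (1 <= i <= n)%nat ->
      forall eps, 0 < eps -> exists T, forall t, T <= t ->
        Rabs (x t i - xs i) < eps.

(* Main.v *)
Require Import Defs.
From Stdlib Require Import Reals.
From Stdlib Require Import Lra Lia Classical FunctionalExtensionality.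
Open Scope R_scope.

Lemma ln_le' : forall u v, 0 < u -> u <= v -> ln u <= ln v.
Proof. intros u v Hu Huv. destruct Huv as [H|H]. left; apply ln_increasing; lra. subst; lra. Qed.

Lemma exp_le' : forall u v, u <= v -> exp u <= exp v.
Proof. intros u v [H|H]. left; apply exp_increasing; lra. subst; lra. Qed.

Lemma dlim_eq : forall f t l l', derivable_pt_lim f t l -> l = l' -> derivable_pt_lim f t l'.
Proof. intros; subst; auto. Qed.

Lemma dlim_ext : forall f g t l, (forall s, f s = g s) -> derivable_pt_lim f t l -> derivable_pt_lim g t l.
Proof. intros f g t l H Hf. replace g with f; auto. extensionality s. auto.
Qed.

Lemma dplus : forall f g t l1 l2, derivable_pt_lim f t l1 -> derivable_pt_lim g t l2 ->
  derivable_pt_lim (fun s => f s + g s) t (l1 + l2).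
Proof. intros. apply (derivable_pt_lim_plus f g); auto. Qed.
Lemma dminus : forall f g t l1 l2, derivable_pt_lim f t l1 -> derivable_pt_lim g t l2 ->
  derivable_pt_lim (fun s => f s - g s) t (l1 - l2).
Proof. intros. apply (derivable_pt_lim_minus f g); auto. Qed.
Lemma dmult : forall f g t l1 l2, derivable_pt_lim f t l1 -> derivable_pt_lim g t l2 ->
  derivable_pt_lim (fun s => f s * g s) t (l1 * g t + f t * l2).
Proof. intros. apply (derivable_pt_lim_mult f g); auto. Qed.
Lemma dconst : forall c t, derivable_pt_lim (fun _ => c) t 0.
Proof. intros. apply (derivable_pt_lim_const c). Qed.
Lemma dscal : forall f c t l, derivable_pt_lim f t l -> derivable_pt_lim (fun s => c * f s) t (c * l).
Proof. intros. apply (derivable_pt_lim_scal f c); auto. Qed.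
Lemma dopp : forall f t l, derivable_pt_lim f t l -> derivable_pt_lim (fun s => - f s) t (- l).
Proof. intros. apply (derivable_pt_lim_opp f); auto. Qed.
Lemma dln : forall f t l, 0 < f t -> derivable_pt_lim f t l -> derivable_pt_lim (fun s => ln (f s)) t (l / f t).
Proof. intros f t l Hp H. apply dlim_eq with (/ f t * l).
  apply (derivable_pt_lim_comp f ln); auto. apply derivable_pt_lim_ln; auto. unfold Rdiv; ring. Qed.
Lemma dexp : forall f t l, derivable_pt_lim f t l -> derivable_pt_lim (fun s => exp (f s)) t (exp (f t) * l).
Proof. intros f t l H. apply (derivable_pt_lim_comp f exp); auto. apply derivable_pt_lim_exp. Qed.
Lemma dcont : forall f t l, derivable_pt_lim f t l -> continuity_pt f t.
Proof. intros f t l H. apply derivable_continuous_pt. exists l; auto. Qed.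

Lemma sumN_S : forall N f, sumN (S N) f = sumN N f + f (S N).
Proof. reflexivity. Qed.
Lemma sumN_ext : forall N f g, (forall k, (1 <= k <= N)%nat -> f k = g k) -> sumN N f = sumN N g.
Proof. induction N; intros f g H; simpl; auto. rewrite (IHN f g); [rewrite (H (S N)); [auto|lia]|]. intros; apply H; lia. Qed.
Lemma sumN_le : forall N f g, (forall k, (1 <= k <= N)%nat -> f k <= g k) -> sumN N f <= sumN N g.
Proof. induction N; intros f g H; simpl. lra. assert (H1 := IHN f g). assert (H2 := H (S N)).
  assert (sumN N f <= sumN N g) by (apply H1; intros; apply H; lia). assert (f (S N) <= g (S N)) by (apply H2; lia). lra. Qed.
Lemma sumN_plus : forall N f g, sumN N (fun k => f k + g k) = sumN N f + sumN N g.
Proof. induction N; intros; simpl. ring. rewrite IHN; ring. Qed.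
Lemma sumN_scal : forall N c f, sumN N (fun k => c * f k) = c * sumN N f.
Proof. induction N; intros; simpl. ring. rewrite IHN; ring. Qed.
Lemma sumN_const : forall N c, sumN N (fun _ => c) = INR N * c.
Proof. induction N; intros; simpl sumN. simpl; ring. rewrite IHN, S_INR; ring. Qed.
Lemma sumN_ind : forall N p f, (1 <= p <= N)%nat -> sumN N (fun k => if Nat.eqb k p then f k else 0) = f p.
Proof. induction N; intros p f Hp. lia. rewrite sumN_S. destruct (Nat.eqb_spec (S N) p).
  - subst. rewrite (sumN_ext N _ (fun _ => 0)). rewrite sumN_const; ring.
    intros k Hk. destruct (Nat.eqb_spec k (S N)); [lia|auto].
  - rewrite IHN; [ring|lia]. Qed.
Lemma sumN_nonneg : forall N f, (forall k, (1 <= k <= N)%nat -> 0 <= f k) -> 0 <= sumN N f.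
Proof. intros. replace 0 with (sumN N (fun _ => 0)). apply sumN_le; auto. rewrite sumN_const; ring. Qed.
Lemma sumN_ge_term : forall N f p, (forall k, (1 <= k <= N)%nat -> 0 <= f k) -> (1 <= p <= N)%nat -> f p <= sumN N f.
Proof. intros N f p H Hp. rewrite <- (sumN_ind N p f Hp) at 1. apply sumN_le. intros k Hk.
  destruct (Nat.eqb_spec k p). lra. apply H; auto. Qed.
Lemma sumN_deriv : forall N (F : R -> nat -> R) F' t,
  (forall k, (1 <= k <= N)%nat -> derivable_pt_lim (fun s => F s k) t (F' k)) ->
  derivable_pt_lim (fun s => sumN N (F s)) t (sumN N F').
Proof. induction N; intros F F' t H; simpl. apply dconst.
  apply dplus. apply IHN; intros; apply H; lia. apply H; lia. Qed.
Lemma sumN_cont : forall N (F : R -> nat -> R) t,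
  (forall k, (1 <= k <= N)%nat -> continuity_pt (fun s => F s k) t) ->
  continuity_pt (fun s => sumN N (F s)) t.
Proof. induction N; intros F t H; simpl. apply continuity_pt_const; intros u v; auto.
  apply (continuity_pt_plus (fun s => sumN N (F s)) (fun s => F s (S N))). apply IHN; intros; apply H; lia. apply H; lia. Qed.

Lemma fin_max : forall N (f : nat -> R), exists M, forall k, (1 <= k <= N)%nat -> f k <= M.
Proof. induction N; intros f. exists 0; intros; lia. destruct (IHN f) as [M HM]. exists (Rmax M (f (S N))).
  intros k Hk. destruct (Nat.eq_dec k (S N)). subst; apply Rmax_r. eapply Rle_trans; [apply HM; lia|apply Rmax_l]. Qed.
Lemma fin_min_pos : forall N (P : nat -> Prop) (f : nat -> R),
  (forall k, (1 <= k <= N)%nat -> P k -> 0 < f k) -> exists m, 0 < m /\ forall k, (1 <= k <= N)%nat -> P k -> m <= f k.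
Proof. induction N; intros P f H. exists 1; split; [lra|intros; lia].
  destruct (IHN P f) as [m [Hm HM]]. intros; apply H; auto; lia.
  destruct (classic (P (S N))) as [HP|HP].
  - exists (Rmin m (f (S N))). split. apply Rmin_pos; auto. apply H; auto; lia.
    intros k Hk Pk. destruct (Nat.eq_dec k (S N)). subst; apply Rmin_r. eapply Rle_trans; [apply Rmin_l|apply HM; auto; lia].
  - exists m. split; auto. intros k Hk Pk. destruct (Nat.eq_dec k (S N)). subst; contradiction. apply HM; auto; lia. Qed.
Lemma fin_event : forall N (P : nat -> R -> Prop),
  (forall k, (1 <= k <= N)%nat -> exists T, forall t, T <= t -> P k t) ->
  exists T, forall t, T <= t -> forall k, (1 <= k <= N)%nat -> P k t.
Proof. induction N; intros P H. exists 0; intros; lia.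
  destruct (IHN P) as [T1 H1]. intros; apply H; lia. destruct (H (S N)) as [T2 H2]. lia.
  exists (Rmax T1 T2). intros t Ht k Hk. destruct (Nat.eq_dec k (S N)). subst; apply H2.
  eapply Rle_trans; [apply Rmax_r|eauto]. apply H1. eapply Rle_trans; [apply Rmax_l|eauto]. lia. Qed.

Lemma cont_eps : forall f x0, continuity_pt f x0 -> forall eps, 0 < eps ->
  exists del, 0 < del /\ forall y, Rabs (y - x0) < del -> Rabs (f y - f x0) < eps.
Proof. intros f x0 Hc eps He. destruct (Hc eps He) as [del [Hd H]]. exists del; split; auto.
  intros y Hy. destruct (Req_dec x0 y). subst. rewrite Rminus_diag, Rabs_R0; auto.
  apply (H y). split. split; auto. exact I. auto. Qed.

Lemma barrier_up : forall (g g' : R -> R) T c k, 0 < k ->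
  (forall t, T <= t -> derivable_pt_lim g t (g' t)) ->
  (forall t, T <= t -> c <= g t -> g' t <= - k) ->
  exists T', T <= T' /\ forall t, T' <= t -> g t <= c.
Proof.
  intros g g' T c k Hk Hd Hneg.
  assert (Hreach : exists t1, T <= t1 /\ g t1 <= c).
  { apply NNPP; intro Hno.
    assert (Hall : forall t, T <= t -> c < g t).
    { intros t Ht. apply Rnot_le_lt. intro Hle. apply Hno. exists t; auto. }
    set (N := Rabs (g T - c) / k + 1).
    assert (HN : 0 < N). { unfold N. assert (0 <= Rabs (g T - c) / k). apply Rmult_le_pos. apply Rabs_pos. left; apply Rinv_0_lt_compat; auto. lra. }
    destruct (MVT_cor2 g g' T (T + N)) as [xi [Heq Hxi]]. lra. intros; apply Hd; lra.
    assert (Hg' : g' xi <= - k). apply Hneg. lra. left; apply Hall; lra.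
    assert (HkN : k * N = Rabs (g T - c) + k). { unfold N. field. lra. }
    assert (H3 := Hall (T + N) ltac:(lra)).
    assert (g' xi * (T + N - T) <= - k * N). { replace (T + N - T) with N by ring. apply Rmult_le_compat_r; lra. }
    assert (g T - c <= Rabs (g T - c)) by apply RRle_abs. lra. }
  destruct Hreach as [t1 [Ht1 Hg1]]. exists t1. split; auto.
  intros t2 Ht2. apply Rnot_lt_le. intro Hgt.
  assert (Hne : t1 < t2). { destruct Ht2 as [H|H]; auto. subst; lra. }
  set (S := fun s => t1 <= s <= t2 /\ g s <= c).
  assert (HB : bound S). { exists t2. intros s [Hs _]. lra. }
  assert (HE : exists s, S s). { exists t1. split; [lra|auto]. }
  destruct (completeness S HB HE) as [m [Hub Hlub]].
  assert (Hm1 : t1 <= m). { apply Hub. split; [lra|auto]. }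
  assert (Hm2 : m <= t2). { apply Hlub. intros s [Hs _]. lra. }
  assert (Hgm : g m <= c).
  { apply Rnot_lt_le. intro Hgm.
    assert (Hc : continuity_pt g m) by (apply (dcont g m (g' m)); apply Hd; lra).
    destruct (cont_eps g m Hc (g m - c)) as [del [Hdel Hd2]]. lra.
    assert (m <= m - del / 2).
    { apply Hlub. intros s [Hs Hgs]. apply Rnot_lt_le. intro Hs2.
      assert (s <= m) by (apply Hub; split; auto).
      assert (Rabs (s - m) < del). { apply Rabs_def1; lra. }
      specialize (Hd2 s H0). apply Rabs_def2 in Hd2. lra. }
    lra. }
  assert (Hm3 : m < t2). { destruct Hm2 as [H|H]; auto. subst; lra. }
  destruct (MVT_cor2 g g' m t2) as [xi [Heq Hxi]]. auto. intros; apply Hd; lra.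
  assert (Hgx : c < g xi). { apply Rnot_le_lt. intro Hle. assert (xi <= m). apply Hub. split; [lra|auto]. lra. }
  assert (Hg' : g' xi <= - k) by (apply Hneg; lra).
  assert (g' xi * (t2 - m) < 0). { assert (g' xi < 0) by lra. assert (0 < t2 - m) by lra. nra. }
  lra.
Qed.

Lemma barrier_low : forall (g g' : R -> R) T c k, 0 < k ->
  (forall t, T <= t -> derivable_pt_lim g t (g' t)) ->
  (forall t, T <= t -> g t <= c -> k <= g' t) ->
  exists T', T <= T' /\ forall t, T' <= t -> c <= g t.
Proof.
  intros g g' T c k Hk Hd Hpos.
  destruct (barrier_up (fun s => - g s) (fun s => - g' s) T (- c) k Hk) as [T' [HT H]].
  intros t Ht. apply dopp; auto.
  intros t Ht Hc. assert (k <= g' t) by (apply Hpos; auto; lra). lra.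
  exists T'. split; auto. intros t Ht. specialize (H t Ht). simpl in H. lra.
Qed.



Lemma alpha_ge_diag : forall n a i y,
  (forall k, (1 <= k <= n)%nat -> 0 <= a i k) -> nonneg_orthant n y -> (1 <= i <= n)%nat ->
  a i i * y i <= alpha n a i y.
Proof. intros n a i y Ha Hy Hi. unfold alpha. apply (sumN_ge_term n (fun k => a i k * y k)); auto.
  intros k Hk. apply Rmult_le_pos; auto. Qed.

Lemma alpha_le_diag : forall n a i y A eta,
  (forall k, (1 <= k <= n)%nat -> 0 <= a i k <= A) -> nonneg_orthant n y -> (1 <= i <= n)%nat ->
  0 <= eta -> (forall k, (1 <= k <= n)%nat -> k <> i -> y k <= eta) ->
  alpha n a i y <= a i i * y i + INR n * (A * eta).
Proof. intros n a i y A eta Ha Hy Hi He Hk. unfold alpha.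
  rewrite <- (sumN_ind n i (fun k => a k k * y k)) by auto.
  rewrite <- sumN_const. rewrite <- sumN_plus. apply sumN_le. intros k Hk1.
  assert (HA := Ha k Hk1). assert (0 <= A) by (destruct (Ha i Hi); lra).
  destruct (Nat.eqb_spec k i).
  - subst. assert (0 <= A * eta) by (apply Rmult_le_pos; auto). lra.
  - assert (y k <= eta) by (apply Hk; auto). assert (0 <= y k) by (apply Hy; auto).
    assert (a i k * y k <= A * eta). { apply Rmult_le_compat; lra. } lra. Qed.

Lemma alpha_key : forall n a l j y A eta delta,
  (1 <= l <= n)%nat -> (1 <= j <= n)%nat ->
  (forall k, (1 <= k <= n)%nat -> 0 <= a l k) ->
  (forall k, (1 <= k <= n)%nat -> 0 <= a j k <= A) ->
  (forall k, (l < k <= n)%nat -> a j k <= a l k) ->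
  delta <= a l l - a j l ->
  nonneg_orthant n y -> 0 <= eta -> (forall k, (1 <= k < l)%nat -> y k <= eta) ->
  alpha n a j y <= alpha n a l y + INR n * (A * eta) - delta * y l.
Proof. intros n a l j y A eta delta Hl Hj Hal Haj Hjl Hd Hy He Hyk. unfold alpha.
  assert (HA : 0 <= A) by (destruct (Haj j Hj); lra).
  assert (HAe : 0 <= A * eta) by (apply Rmult_le_pos; auto).
  apply Rle_trans with (sumN n (fun k => (a l k * y k + (if Nat.eqb k l then - delta * y l else 0)) + (if Nat.ltb k l then A * eta else 0))).
  - apply sumN_le. intros k Hk. assert (Hyk0 := Hy k Hk). assert (Hlk := Hal k Hk). assert (Hjk := Haj k Hk).
    destruct (Nat.eqb_spec k l).
    + subst. rewrite Nat.ltb_irrefl. nra.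
    + destruct (Nat.ltb_spec k l).
      * assert (y k <= eta) by (apply Hyk; lia). assert (a j k * y k <= A * eta) by (apply Rmult_le_compat; lra).
        assert (0 <= a l k * y k) by (apply Rmult_le_pos; auto). lra.
      * assert (a j k <= a l k) by (apply Hjl; lia). assert (a j k * y k <= a l k * y k) by (apply Rmult_le_compat_r; auto). lra.
  - rewrite !sumN_plus. rewrite (sumN_ind n l (fun _ => - delta * y l)) by auto.
    assert (sumN n (fun k => if Nat.ltb k l then A * eta else 0) <= INR n * (A * eta)).
    { rewrite <- sumN_const. apply sumN_le. intros k Hk. destruct (Nat.ltb k l); lra. }
    lra.
Qed.

Lemma alpha_plus : forall n a i y z, alpha n a i (fun k => y k + z k) = alpha n a i y + alpha n a i z.
Proof. intros. unfold alpha. rewrite <- sumN_plus. apply sumN_ext. intros; ring. Qed.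

Lemma alpha_ind : forall n a i p v, (1 <= p <= n)%nat ->
  alpha n a i (fun k => if Nat.eqb k p then v else 0) = a i p * v.
Proof. intros. unfold alpha. rewrite <- (sumN_ind n p (fun k => a i k * v)) by auto.
  apply sumN_ext. intros k Hk. destruct (Nat.eqb k p); ring. Qed.

Lemma coef_facts : forall n a,
  (forall i, (1 <= i <= n)%nat -> 0 < a i i) ->
  (forall i j, (1 <= i <= n)%nat -> (1 <= j <= n)%nat -> 0 <= a i j) ->
  (forall l j, (1 <= l <= n - 1)%nat -> (l < j <= n)%nat -> alpha n a j (Yl a l) < 1) ->
  (forall l j, (1 <= l <= n - 1)%nat -> (l < j <= n)%nat ->
          forall y : nat -> R, nonneg_orthant n y -> alpha n a l y = 1 ->
            (forall k, (1 <= k <= l - 1)%nat -> y k = 0) -> alpha n a j y <= 1) ->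
  (forall l j, (1 <= l <= n - 1)%nat -> (l < j <= n)%nat -> a j l < a l l) /\
  (forall l j k, (1 <= l <= n - 1)%nat -> (l < j <= n)%nat -> (l < k <= n)%nat -> a j k <= a l k).
Proof.
  intros n a Haii Haij H1 H2. split.
  - intros l j Hl Hj. specialize (H1 l j Hl Hj). unfold Yl in H1. rewrite alpha_ind in H1 by lia.
    assert (Hll : 0 < a l l) by (apply Haii; lia).
    apply Rmult_lt_compat_r with (r := a l l) in H1; auto. rewrite Rmult_assoc, Rinv_l in H1 by lra. lra.
  - intros l j k Hl Hj Hk.
    assert (Hll : 0 < a l l) by (apply Haii; lia).
    assert (Hlk : 0 <= a l k) by (apply Haij; lia).
    assert (Hjk : 0 <= a j k) by (apply Haij; lia).
    assert (Hjl : 0 <= a j l) by (apply Haij; lia).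
    destruct Hlk as [Hlk|Hlk].
    + set (y := fun m => if Nat.eqb m k then / a l k else 0).
      assert (Hy : alpha n a j y <= 1).
      { apply (H2 l j Hl Hj).
        - intros m Hm. unfold y. destruct (Nat.eqb m k). left; apply Rinv_0_lt_compat; auto. lra.
        - unfold y. rewrite alpha_ind by lia. field; lra.
        - intros m Hm. unfold y. destruct (Nat.eqb_spec m k). lia. auto. }
      unfold y in Hy. rewrite alpha_ind in Hy by lia.
      apply Rmult_le_compat_r with (r := a l k) in Hy; [|lra]. rewrite Rmult_assoc, Rinv_l in Hy by lra. lra.
    + apply Rnot_lt_le. intro Hc. rewrite <- Hlk in Hc.
      set (y := fun m => (if Nat.eqb m l then / a l l else 0) + (if Nat.eqb m k then 2 / a j k else 0)).
      assert (Hy : alpha n a j y <= 1).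
      { apply (H2 l j Hl Hj).
        - intros m Hm. unfold y. assert (0 < / a l l) by (apply Rinv_0_lt_compat; auto).
          assert (0 < 2 / a j k) by (apply Rdiv_lt_0_compat; lra).
          destruct (Nat.eqb m l); destruct (Nat.eqb m k); lra.
        - unfold y. rewrite alpha_plus, !alpha_ind by lia. rewrite <- Hlk. field; lra.
        - intros m Hm. unfold y. destruct (Nat.eqb_spec m l). lia. destruct (Nat.eqb_spec m k). lia. ring. }
      unfold y in Hy. rewrite alpha_plus, !alpha_ind in Hy by lia.
      assert (a j k * (2 / a j k) = 2) by (field; lra).
      assert (0 <= a j l * / a l l) by (apply Rmult_le_pos; [lra|left; apply Rinv_0_lt_compat; auto]).
      lra.
Qed.



Section Sol.
Variables (n : nat) (a : nat -> nat -> R) (b : nat -> R) (x : R -> nat -> R).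
Hypothesis Hb : forall i, (1 <= i <= n)%nat -> 0 < b i.
Hypothesis Haii : forall i, (1 <= i <= n)%nat -> 0 < a i i.
Hypothesis Haij : forall i j, (1 <= i <= n)%nat -> (1 <= j <= n)%nat -> 0 <= a i j.
Hypothesis Hsol : LV_solution n a b x.
Hypothesis Hx0 : forall i, (1 <= i <= n)%nat -> 0 < x 0 i.

Definition D i t := b i * (1 - alpha n a i (x t)).

Lemma xderiv : forall i t, (1 <= i <= n)%nat -> 0 < t ->
  derivable_pt_lim (fun s => x s i) t (b i * x t i * (1 - alpha n a i (x t))).
Proof. intros. apply (proj1 Hsol); auto. Qed.

Lemma xcont : forall i t, (1 <= i <= n)%nat -> 0 < t -> continuity_pt (fun s => x s i) t.
Proof. intros. eapply dcont. apply xderiv; auto. Qed.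

Lemma alpha_cont : forall i t, 0 < t -> continuity_pt (fun s => alpha n a i (x s)) t.
Proof. intros i t Ht. unfold alpha. apply (sumN_cont n (fun s j => a i j * x s j)).
  intros k Hk. apply (continuity_pt_scal (fun s => x s k)). apply xcont; auto. Qed.

Lemma D_cont : forall i t, 0 < t -> continuity_pt (D i) t.
Proof. intros i t Ht. unfold D.
  apply (continuity_pt_scal (fun s => 1 - alpha n a i (x s))).
  apply (continuity_pt_minus (fun _ => 1) (fun s => alpha n a i (x s))).
  apply continuity_pt_const; intros u v; auto. apply alpha_cont; auto. Qed.

Lemma lnx_deriv : forall i t, (1 <= i <= n)%nat -> 0 < t -> 0 < x t i ->
  derivable_pt_lim (fun s => ln (x s i)) t (D i t).
Proof. intros i t Hi Ht Hp. eapply dlim_eq. apply dln; auto. apply xderiv; auto.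
  unfold D. field. lra. Qed.

Lemma pos : forall i, (1 <= i <= n)%nat -> forall t, 0 <= t -> 0 < x t i.
Proof.
  intros i Hi t2 Ht2. apply Rnot_le_lt; intro Hneg.
  set (S := fun s => 0 <= s <= t2 /\ forall u, 0 <= u <= s -> 0 < x u i).
  assert (HB : bound S). { exists t2. intros s [Hs _]. lra. }
  assert (HE : exists s, S s). { exists 0. split. lra. intros u Hu. replace u with 0 by lra. auto. }
  destruct (completeness S HB HE) as [m [Hub Hlub]].
  destruct (proj2 Hsol i Hi (x 0 i) (Hx0 i Hi)) as [del [Hdel Hr]].
  assert (Hr' : forall t, 0 <= t < del -> 0 < x t i).
  { intros t Ht. specialize (Hr t Ht). apply Rabs_def2 in Hr. lra. }
  assert (Hdt : del <= t2). { apply Rnot_lt_le; intro. assert (0 < x t2 i) by (apply Hr'; lra). lra. }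
  assert (Hm0 : del / 2 <= m). { apply Hub. split. lra. intros u Hu. apply Hr'; lra. }
  assert (Hmt : m <= t2). { apply Hlub. intros s [Hs _]. lra. }
  assert (Hbelow : forall u, 0 <= u < m -> 0 < x u i).
  { intros u Hu. apply NNPP; intro Hn.
    assert (m <= u). { apply Hlub. intros s [Hs Hs2]. apply Rnot_lt_le. intro. apply Hn. apply Hs2; lra. }
    lra. }
  destruct (continuity_ab_min (D i) (m/2) m) as [mx [Hmx Hmxr]]. lra.
  intros c Hc. apply D_cont; lra.
  set (q := exp (ln (x (m/2) i) - Rabs (D i mx) * m)).
  assert (Hq : 0 < q) by apply exp_pos.
  assert (Hlow : forall u, m/2 <= u < m -> q <= x u i).
  { intros u Hu. assert (Hpu : 0 < x u i) by (apply Hbelow; lra).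
    rewrite <- (exp_ln (x u i)) by auto. unfold q. apply exp_le'.
    destruct (Req_dec u (m/2)) as [Heq|Hne].
    - subst u. assert (0 <= Rabs (D i mx) * m). apply Rmult_le_pos. apply Rabs_pos. lra. lra.
    - destruct (MVT_cor2 (fun s => ln (x s i)) (D i) (m/2) u) as [xi [Heq Hxi]]. lra.
      intros c Hc. apply lnx_deriv; auto; try lra. apply Hbelow; lra.
      assert (D i mx <= D i xi) by (apply Hmx; lra).
      assert (- Rabs (D i mx) <= D i mx). { destruct (Rcase_abs (D i mx)). rewrite Rabs_left; lra. rewrite Rabs_right; lra. }
      assert (- Rabs (D i mx) * m <= D i xi * (u - m/2)).
      { assert (- Rabs (D i mx) * m <= - Rabs (D i mx) * (u - m/2)).
        { assert (0 <= Rabs (D i mx)) by apply Rabs_pos. nra. }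
        assert (- Rabs (D i mx) * (u - m/2) <= D i xi * (u - m/2)). { apply Rmult_le_compat_r; lra. }
        lra. }
      lra. }
  assert (Hcm : continuity_pt (fun s => x s i) m) by (apply xcont; [auto|lra]).
  assert (Hxm : q <= x m i).
  { apply Rnot_lt_le; intro Hlt.
    destruct (cont_eps _ _ Hcm (q - x m i)) as [d2 [Hd2 Hc2]]. lra.
    set (u := Rmax (m/2) (m - d2/2)).
    assert (m/2 <= u) by apply Rmax_l. assert (m - d2/2 <= u) by apply Rmax_r.
    assert (u < m). { unfold u. apply Rmax_lub_lt; lra. }
    assert (Rabs (u - m) < d2) by (apply Rabs_def1; lra).
    specialize (Hc2 u H2). simpl in Hc2. apply Rabs_def2 in Hc2.
    assert (q <= x u i) by (apply Hlow; lra). lra. }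
  destruct (cont_eps _ _ Hcm (x m i)) as [d3 [Hd3 Hc3]]. lra.
  assert (Hpos3 : forall u, Rabs (u - m) < d3 -> 0 < x u i).
  { intros u Hu. specialize (Hc3 u Hu). simpl in Hc3. apply Rabs_def2 in Hc3. lra. }
  assert (Ht3 : m + d3 <= t2).
  { apply Rnot_lt_le; intro. assert (0 < x t2 i). apply Hpos3. apply Rabs_def1; lra. lra. }
  assert (m + d3/2 <= m).
  { apply Hub. split. lra. intros u Hu. destruct (Rlt_le_dec u m). apply Hbelow; lra.
    apply Hpos3. apply Rabs_def1; lra. }
  lra.
Qed.


Lemma ln_le_inv : forall u v, 0 < u -> 0 < v -> ln u <= ln v -> u <= v.
Proof. intros u v Hu Hv H. apply Rnot_lt_le. intro Hlt. assert (ln v < ln u) by (apply ln_increasing; auto). lra. Qed.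

Lemma xnonneg : forall t, 0 <= t -> nonneg_orthant n (x t).
Proof. intros t Ht k Hk. left; apply pos; auto. Qed.

Lemma upper : forall i, (1 <= i <= n)%nat -> forall eps, 0 < eps ->
  exists T, 1 <= T /\ forall t, T <= t -> x t i <= (1 + eps) / a i i.
Proof.
  intros i Hi eps He. assert (Ha := Haii i Hi). assert (Hbi := Hb i Hi).
  assert (Hc : 0 < (1 + eps) / a i i) by (apply Rdiv_lt_0_compat; lra).
  destruct (barrier_up (fun s => ln (x s i)) (D i) 1 (ln ((1 + eps) / a i i)) (b i * eps)) as [T [HT H]].
  apply Rmult_lt_0_compat; auto.
  intros t Ht. apply lnx_deriv; auto; try lra. apply pos; auto; lra.
  intros t Ht Hle. assert (Hp : 0 < x t i) by (apply pos; auto; lra).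
  assert (Hx : (1 + eps) / a i i <= x t i) by (apply ln_le_inv; auto).
  assert (a i i * x t i <= alpha n a i (x t)).
  { apply alpha_ge_diag; [intros; apply Haij; auto | apply xnonneg; lra | auto]. }
  assert (1 + eps <= a i i * x t i).
  { replace (1 + eps) with (a i i * ((1 + eps) / a i i)) by (field; lra). apply Rmult_le_compat_l; lra. }
  unfold D. assert (1 - alpha n a i (x t) <= - eps) by lra.
  replace (- (b i * eps)) with (b i * (- eps)) by ring. apply Rmult_le_compat_l; lra.
  exists T. split; auto. intros t Ht. apply ln_le_inv; auto. apply pos; auto; lra.
Qed.

Lemma bounded : exists B, 0 < B /\ exists T, 1 <= T /\ forall t, T <= t -> forall i, (1 <= i <= n)%nat -> x t i <= B.
Proof.
  destruct (fin_event n (fun i t => x t i <= (1 + 1) / a i i)) as [T HT].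
  intros k Hk. destruct (upper k Hk 1 ltac:(lra)) as [T [_ H]]. exists T; auto.
  exists (sumN n (fun i => (1 + 1) / a i i) + 1). split.
  assert (0 <= sumN n (fun i => (1 + 1) / a i i)). apply sumN_nonneg. intros k Hk. left; apply Rdiv_lt_0_compat; [lra|auto].
  lra.
  exists (Rmax T 1). split. apply Rmax_r. intros t Ht i Hi.
  eapply Rle_trans. apply HT; auto. eapply Rle_trans; [apply Rmax_l|eauto].
  assert ((1 + 1) / a i i <= sumN n (fun i => (1 + 1) / a i i)).
  apply (sumN_ge_term n (fun i => (1+1) / a i i)); auto. intros k Hk. left; apply Rdiv_lt_0_compat; [lra|auto].
  lra.
Qed.

Lemma Abound : exists A, forall j k, (1 <= j <= n)%nat -> (1 <= k <= n)%nat -> 0 <= a j k <= A.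
Proof.
  exists (sumN n (fun j => sumN n (fun k => a j k))). intros j k Hj Hk. split. apply Haij; auto.
  eapply Rle_trans. apply (sumN_ge_term n (fun k => a j k)); [intros; apply Haij; auto|auto].
  apply (sumN_ge_term n (fun j => sumN n (fun k => a j k))); [intros; apply sumN_nonneg; intros; apply Haij; auto|auto].
Qed.


Hypothesis Hn2 : (2 <= n)%nat.
Hypothesis HD : forall l j, (1 <= l <= n - 1)%nat -> (l < j <= n)%nat -> a j l < a l l.
Hypothesis HA : forall l j k, (1 <= l <= n - 1)%nat -> (l < j <= n)%nat -> (l < k <= n)%nat -> a j k <= a l k.

Definition Zf l t := sumN n (fun j => if Nat.ltb l j then exp (b l / b j * ln (x t j)) else 0).
Definition Zd l t := sumN n (fun j => if Nat.ltb l j then exp (b l / b j * ln (x t j)) * (b l / b j * D j t) else 0).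

Lemma Z_deriv : forall l t, 0 < t -> derivable_pt_lim (Zf l) t (Zd l t).
Proof.
  intros l t Ht. unfold Zf, Zd.
  apply (sumN_deriv n (fun s j => if Nat.ltb l j then exp (b l / b j * ln (x s j)) else 0)
     (fun j => if Nat.ltb l j then exp (b l / b j * ln (x t j)) * (b l / b j * D j t) else 0)).
  intros k Hk. destruct (Nat.ltb l k).
  - apply (dexp (fun s => b l / b k * ln (x s k))). apply (dscal (fun s => ln (x s k))).
    apply lnx_deriv; auto. apply pos; auto; lra.
  - apply dconst.
Qed.

Lemma Z_terms_nonneg : forall l t k, 0 <= (if Nat.ltb l k then exp (b l / b k * ln (x t k)) else 0).
Proof. intros. destruct (Nat.ltb l k). left; apply exp_pos. lra. Qed.

Lemma Z_pos : forall l t, (l < n)%nat -> 0 < Zf l t.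
Proof.
  intros l t Hl. unfold Zf. eapply Rlt_le_trans; [|apply (sumN_ge_term n _ n)].
  2: { intros; apply Z_terms_nonneg. } 2: lia.
  simpl. destruct (Nat.ltb_spec l n). apply exp_pos. lia.
Qed.

Lemma Zd_ge : forall l delta A eta t, (1 <= l <= n - 1)%nat ->
  (forall j, (l < j <= n)%nat -> delta <= a l l - a j l) ->
  (forall j k, (1 <= j <= n)%nat -> (1 <= k <= n)%nat -> 0 <= a j k <= A) ->
  0 < t -> 0 <= eta -> (forall k, (1 <= k < l)%nat -> x t k <= eta) ->
  b l * (1 - alpha n a l (x t) - INR n * (A * eta) + delta * x t l) * Zf l t <= Zd l t.
Proof.
  intros l delta A eta t Hl Hd HAb Ht He Hk. unfold Zf, Zd. rewrite <- sumN_scal. apply sumN_le.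
  intros j Hj. destruct (Nat.ltb_spec l j).
  - assert (Hbj := Hb j Hj). assert (Hbl : 0 < b l) by (apply Hb; lia).
    set (e := exp (b l / b j * ln (x t j))). assert (He0 : 0 < e) by apply exp_pos.
    assert (Hk2 : alpha n a j (x t) <= alpha n a l (x t) + INR n * (A * eta) - delta * x t l).
    { apply (alpha_key n a l j (x t) A eta delta); [lia|lia|intros k Hk'; apply Haij; lia|intros k Hk'; apply HAb; lia|intros k Hk'; apply HA; lia|apply Hd; lia|apply xnonneg; lra|auto|auto]. }
    replace (e * (b l / b j * D j t)) with (b l * (1 - alpha n a j (x t)) * e) by (unfold D; field; lra).
    apply Rmult_le_compat_r; [lra|]. apply Rmult_le_compat_l; lra.
  - lra.
Qed.


Definition Zmax l B := sumN n (fun j => if Nat.ltb l j then exp (b l / b j * ln B) else 0).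

Lemma Z_le_max : forall l B t, 0 <= t -> (forall j, (1 <= j <= n)%nat -> x t j <= B) -> (1 <= l)%nat ->
  Zf l t <= Zmax l B.
Proof.
  intros l B t Ht HB Hl. unfold Zf, Zmax. apply sumN_le. intros j Hj. destruct (Nat.ltb_spec l j); [|lra].
  apply exp_le'. assert (0 < b l / b j) by (apply Rdiv_lt_0_compat; apply Hb; lia).
  apply Rmult_le_compat_l; [lra|]. apply ln_le'. apply pos; auto. apply HB; auto.
Qed.

Lemma Zmax_pos : forall l B, (l < n)%nat -> 0 < Zmax l B.
Proof.
  intros l B Hl. unfold Zmax. eapply Rlt_le_trans; [|apply (sumN_ge_term n _ n)].
  2: { intros k Hk. destruct (Nat.ltb l k). left; apply exp_pos. lra. } 2: lia.
  simpl. destruct (Nat.ltb_spec l n). apply exp_pos. lia.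
Qed.

Lemma Z_small : forall l Th eta t, (1 <= l)%nat -> (forall j, (1 <= j <= n)%nat -> b l / b j <= Th) ->
  0 < eta -> 0 <= t -> Zf l t <= exp (- Th * Rabs (ln eta)) -> forall j, (l < j <= n)%nat -> x t j <= eta.
Proof.
  intros l Th eta t Hl HTh He Ht HZ j Hj.
  assert (Hth : 0 < b l / b j) by (apply Rdiv_lt_0_compat; apply Hb; lia).
  assert (Hth2 : b l / b j <= Th) by (apply HTh; lia).
  assert (Hterm : exp (b l / b j * ln (x t j)) <= Zf l t).
  { unfold Zf. eapply Rle_trans; [|apply (sumN_ge_term n _ j)]. 2: intros; apply Z_terms_nonneg. 2: lia.
    cbv beta. destruct (Nat.ltb_spec l j). lra. lia. }
  assert (H1 : b l / b j * ln (x t j) <= - Th * Rabs (ln eta)).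
  { apply Rnot_lt_le. intro Hlt. apply exp_increasing in Hlt. lra. }
  assert (H0 : 0 <= Rabs (ln eta)) by apply Rabs_pos.
  assert (H2 : - Th * Rabs (ln eta) <= - (b l / b j) * Rabs (ln eta)) by nra.
  assert (H3 : ln (x t j) <= - Rabs (ln eta)).
  { apply Rmult_le_reg_l with (b l / b j); auto. lra. }
  assert (- Rabs (ln eta) <= ln eta). { assert (H4 := Rabs_Ropp (ln eta)). assert (H5 := RRle_abs (- ln eta)). lra. }
  apply ln_le_inv; auto. apply pos; auto; lia. lra.
Qed.

Lemma delta_exists : forall l, (1 <= l <= n - 1)%nat ->
  exists delta, 0 < delta /\ delta <= a l l /\ forall j, (l < j <= n)%nat -> delta <= a l l - a j l.
Proof.
  intros l Hl. destruct (fin_min_pos n (fun j => (l < j)%nat) (fun j => a l l - a j l)) as [d [Hd H]].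
  intros k Hk Hlk. assert (a k l < a l l) by (apply HD; lia). lra.
  exists d. split; auto. split. assert (d <= a l l - a n l) by (apply H; lia). assert (0 <= a n l) by (apply Haij; lia). lra.
  intros j Hj. apply H; lia.
Qed.

Lemma event_below : forall l eta, (l <= n)%nat -> 0 < eta ->
  (forall k, (1 <= k < l)%nat -> forall eps, 0 < eps -> exists T, forall t, T <= t -> x t k <= eps) ->
  exists T, forall t, T <= t -> forall k, (1 <= k < l)%nat -> x t k <= eta.
Proof.
  intros l eta Hln He IH. destruct (fin_event n (fun k t => (k < l)%nat -> x t k <= eta)) as [T HT].
  { intros k Hk. destruct (Nat.ltb_spec k l).
  - destruct (IH k ltac:(lia) eta He) as [T HT]. exists T. intros; auto.
  - exists 0. intros; lia. }
  exists T. intros t Ht k Hk. apply HT; auto; lia.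
Qed.


Lemma lnZ_deriv : forall l t, (l < n)%nat -> 0 < t ->
  derivable_pt_lim (fun s => ln (Zf l s)) t (Zd l t / Zf l t).
Proof. intros. apply (dln (Zf l)). apply Z_pos; auto. apply Z_deriv; auto. Qed.

Lemma Zratio_ge : forall l L t, (l < n)%nat -> b l * L * Zf l t <= Zd l t -> b l * L <= Zd l t / Zf l t.
Proof.
  intros l L t Hl H. assert (HZ := Z_pos l t Hl).
  replace (b l * L) with (b l * L * Zf l t / Zf l t) by (field; lra).
  unfold Rdiv. apply Rmult_le_compat_r; auto. left; apply Rinv_0_lt_compat; auto.
Qed.

Lemma Zpersist : forall l, (1 <= l <= n - 1)%nat ->
  (forall k, (1 <= k < l)%nat -> forall eps, 0 < eps -> exists T, forall t, T <= t -> x t k <= eps) ->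
  exists zeta, 0 < zeta /\ exists T, forall t, T <= t -> zeta <= Zf l t.
Proof.
  intros l Hl IH.
  destruct (delta_exists l Hl) as [d [Hd [Hdl Hdj]]].
  destruct Abound as [A HAb].
  assert (HA0 : 0 <= A) by (destruct (HAb 1%nat 1%nat); [lia|lia|lra]).
  destruct (fin_max n (fun j => b l / b j)) as [Th0 HTh0].
  set (Th := Rmax Th0 1).
  assert (HTh : forall j, (1 <= j <= n)%nat -> b l / b j <= Th).
  { intros j Hj. eapply Rle_trans; [apply HTh0; auto|apply Rmax_l]. }
  assert (Hll : 0 < a l l) by (apply Haii; lia).
  assert (Hbl : 0 < b l) by (apply Hb; lia).
  set (w := d / a l l). assert (Hw : 0 < w) by (apply Rdiv_lt_0_compat; auto).
  set (e1 := w / 4).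
  assert (Hn0 : 0 <= INR n) by apply pos_INR.
  assert (HnA : 0 <= INR n * A) by (apply Rmult_le_pos; auto).
  set (eta := w / 4 / (2 * (INR n * A) + 1)).
  assert (Heta : 0 < eta) by (apply Rdiv_lt_0_compat; lra).
  assert (Heta2 : (2 * (INR n * A) + 1) * eta = w / 4) by (unfold eta; field; lra).
  destruct (upper l ltac:(lia) e1 ltac:(unfold e1; lra)) as [T1 [HT1 HU]].
  destruct (event_below l eta ltac:(lia) Heta IH) as [T2 HT2].
  set (T := Rmax (Rmax T1 T2) 1).
  assert (HTa : T1 <= T /\ T2 <= T /\ 1 <= T).
  { unfold T. split; [|split]. eapply Rle_trans; [apply Rmax_l|apply Rmax_l].
    eapply Rle_trans; [apply Rmax_r|apply Rmax_l]. apply Rmax_r. }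
  set (zeta := exp (- Th * Rabs (ln eta))).
  destruct (barrier_low (fun s => ln (Zf l s)) (fun s => Zd l s / Zf l s) T (ln zeta) (b l * (w / 2))) as [T' [HT' H]].
  - apply Rmult_lt_0_compat; lra.
  - intros t Ht. apply lnZ_deriv; lia || lra.
  - intros t Ht Hle.
    assert (Hz : Zf l t <= zeta). { apply ln_le_inv; auto. apply Z_pos; lia. apply exp_pos. }
    assert (Hbig : forall j, (l < j <= n)%nat -> x t j <= eta).
    { apply (Z_small l Th); auto; lia || lra. }
    assert (Hsm : forall k, (1 <= k < l)%nat -> x t k <= eta) by (apply HT2; lra).
    assert (Hxl : x t l <= (1 + e1) / a l l) by (apply HU; lra).
    assert (Hal : alpha n a l (x t) <= a l l * x t l + INR n * (A * eta)).
    { apply alpha_le_diag; [intros k Hk; apply HAb; lia|apply xnonneg; lra|lia|lra|].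
      intros k Hk Hkl. destruct (Nat.lt_ge_cases k l). apply Hsm; lia. apply Hbig; lia. }
    assert (Hzd := Zd_ge l d A eta t Hl Hdj HAb ltac:(lra) ltac:(lra) Hsm).
    apply Zratio_ge in Hzd; [|lia].
    eapply Rle_trans; [|apply Hzd]. apply Rmult_le_compat_l; [lra|].
    assert (Hxl0 : 0 < x t l) by (apply pos; lia || lra).
    assert (H1 : (a l l - d) * x t l <= (a l l - d) * ((1 + e1) / a l l)) by (apply Rmult_le_compat_l; lra).
    assert (H2 : (a l l - d) * ((1 + e1) / a l l) = 1 + e1 - w * (1 + e1)) by (unfold w; field; lra).
    assert (H3 : 0 <= w * e1) by (unfold e1; nra).
    assert (H4 : INR n * (A * eta) <= (INR n * A) * eta) by (right; ring).
    assert (H5 : 0 <= INR n * A * eta) by (apply Rmult_le_pos; lra).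
    unfold e1 in *. nra.
  - exists zeta. split. apply exp_pos. exists T'. intros t Ht. apply ln_le_inv. apply exp_pos. apply Z_pos; lia.
    apply H; auto.
Qed.


Lemma Pstep : forall l, (1 <= l <= n - 1)%nat ->
  (forall k, (1 <= k < l)%nat -> forall eps, 0 < eps -> exists T, forall t, T <= t -> x t k <= eps) ->
  forall eps, 0 < eps -> exists T, forall t, T <= t -> x t l <= eps.
Proof.
  intros l Hl IH eps Heps.
  destruct (delta_exists l Hl) as [d [Hd [Hdl Hdj]]].
  destruct Abound as [A HAb].
  assert (HA0 : 0 <= A) by (destruct (HAb 1%nat 1%nat); [lia|lia|lra]).
  assert (Hbl : 0 < b l) by (apply Hb; lia).
  destruct (Zpersist l Hl IH) as [zeta [Hzeta [T1 HT1]]].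
  destruct bounded as [B [HB [TB [HTB HBd]]]].
  set (Zm := Zmax l B). assert (HZm : 0 < Zm) by (apply Zmax_pos; lia).
  set (K := ln (eps / Zm)).
  set (c := eps * zeta / Zm). assert (Hc : 0 < c) by (unfold c; apply Rdiv_lt_0_compat; [apply Rmult_lt_0_compat|]; auto).
  assert (Hn0 : 0 <= INR n) by apply pos_INR.
  assert (HnA : 0 <= INR n * A) by (apply Rmult_le_pos; auto).
  set (eta := d * c / (2 * (INR n * A + 1))).
  assert (Heta : 0 < eta) by (unfold eta; apply Rdiv_lt_0_compat; [apply Rmult_lt_0_compat|]; lra).
  assert (Heta2 : 2 * (INR n * A + 1) * eta = d * c) by (unfold eta; field; lra).
  destruct (event_below l eta ltac:(lia) Heta IH) as [T2 HT2].
  set (T := Rmax (Rmax T1 T2) (Rmax TB 1)).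
  assert (HTa : T1 <= T /\ T2 <= T /\ TB <= T /\ 1 <= T).
  { unfold T. split; [|split; [|split]]. eapply Rle_trans; [apply Rmax_l|apply Rmax_l].
    eapply Rle_trans; [apply Rmax_r|apply Rmax_l]. eapply Rle_trans; [apply Rmax_l|apply Rmax_r].
    eapply Rle_trans; [apply Rmax_r|apply Rmax_r]. }
  destruct (barrier_up (fun s => ln (x s l) - ln (Zf l s)) (fun s => D l s - Zd l s / Zf l s) T K (b l * (d * c / 2)))
    as [T' [HT' H]].
  - assert (0 < d * c) by (apply Rmult_lt_0_compat; lra). apply Rmult_lt_0_compat; lra.
  - intros t Ht. apply dminus. apply lnx_deriv; try lia; try lra. apply pos; lia || lra. apply lnZ_deriv; lia || lra.
  - intros t Ht Hle.
    assert (HZ := Z_pos l t ltac:(lia)).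
    assert (Hxl0 : 0 < x t l) by (apply pos; lia || lra).
    assert (Hsm : forall k, (1 <= k < l)%nat -> x t k <= eta) by (apply HT2; lra).
    assert (Hzt : zeta <= Zf l t) by (apply HT1; lra).
    assert (Hxc : c <= x t l).
    { assert (Hk1 : K + ln (Zf l t) <= ln (x t l)) by lra.
      apply exp_le' in Hk1. rewrite exp_ln in Hk1 by auto. rewrite exp_plus, exp_ln in Hk1 by auto.
      unfold K in Hk1. rewrite exp_ln in Hk1 by (apply Rdiv_lt_0_compat; auto).
      unfold c. eapply Rle_trans; [|apply Hk1]. unfold Rdiv.
      replace (eps * zeta * / Zm) with (eps * / Zm * zeta) by ring. apply Rmult_le_compat_l; auto.
      left; apply Rmult_lt_0_compat; auto. apply Rinv_0_lt_compat; auto. }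
    assert (Hzd := Zd_ge l d A eta t Hl Hdj HAb ltac:(lra) ltac:(lra) Hsm).
    apply Zratio_ge in Hzd; [|lia].
    unfold D. 
    assert (H4 : INR n * (A * eta) <= d * c / 2).
    { assert (0 <= INR n * A * eta) by (apply Rmult_le_pos; lra).
      replace (INR n * (A * eta)) with (INR n * A * eta) by ring. nra. }
    assert (H5 : d * c <= d * x t l) by (apply Rmult_le_compat_l; lra).
    assert (b l * (INR n * (A * eta) - d * x t l) <= b l * (- (d * c / 2))) by (apply Rmult_le_compat_l; lra).
    nra.
  - exists T'. intros t Ht. specialize (H t Ht). cbv beta in H.
    assert (HZ := Z_pos l t ltac:(lia)).
    assert (Hxl0 : 0 < x t l) by (apply pos; lia || lra).
    assert (Hk1 : ln (x t l) <= K + ln (Zf l t)) by lra.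
    apply exp_le' in Hk1. rewrite exp_ln in Hk1 by auto. rewrite exp_plus, exp_ln in Hk1 by auto.
    unfold K in Hk1. rewrite exp_ln in Hk1 by (apply Rdiv_lt_0_compat; auto).
    assert (HZm2 : Zf l t <= Zm) by (apply Z_le_max; [lra| |lia]; intros j Hj; apply HBd; auto; lra).
    eapply Rle_trans; [apply Hk1|].
    replace eps with (eps / Zm * Zm) at 2 by (field; lra).
    apply Rmult_le_compat_l; auto. left; apply Rdiv_lt_0_compat; auto.
Qed.


Lemma Pall : forall l, (1 <= l <= n - 1)%nat ->
  forall eps, 0 < eps -> exists T, forall t, T <= t -> x t l <= eps.
Proof.
  intros l. induction l as [l IHl] using (well_founded_induction Wf_nat.lt_wf). intros Hl.
  apply Pstep; auto. intros k Hk. apply IHl; lia.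
Qed.

Lemma xn_lower : forall eps, 0 < eps < 1 -> exists T, forall t, T <= t -> (1 - eps) / a n n <= x t n.
Proof.
  intros eps He.
  destruct Abound as [A HAb].
  assert (HA0 : 0 <= A) by (destruct (HAb 1%nat 1%nat); [lia|lia|lra]).
  assert (Hnn : 0 < a n n) by (apply Haii; lia).
  assert (Hbn : 0 < b n) by (apply Hb; lia).
  assert (Hn0 : 0 <= INR n) by apply pos_INR.
  assert (HnA : 0 <= INR n * A) by (apply Rmult_le_pos; auto).
  set (eta := eps / (2 * (INR n * A + 1))).
  assert (Heta : 0 < eta) by (unfold eta; apply Rdiv_lt_0_compat; lra).
  assert (Heta2 : 2 * (INR n * A + 1) * eta = eps) by (unfold eta; field; lra).
  destruct (event_below n eta ltac:(lia) Heta) as [T2 HT2].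
  { intros k Hk. apply Pall; lia. }
  assert (Hc : 0 < (1 - eps) / a n n) by (apply Rdiv_lt_0_compat; lra).
  destruct (barrier_low (fun s => ln (x s n)) (D n) (Rmax T2 1) (ln ((1 - eps) / a n n)) (b n * (eps / 2))) as [T' [HT' H]].
  - apply Rmult_lt_0_compat; lra.
  - intros t Ht. assert (1 <= t) by (eapply Rle_trans; [apply Rmax_r|eauto]).
    apply lnx_deriv; try lia; try lra. apply pos; lia || lra.
  - intros t Ht Hle. assert (1 <= t) by (eapply Rle_trans; [apply Rmax_r|eauto]).
    assert (T2 <= t) by (eapply Rle_trans; [apply Rmax_l|eauto]).
    assert (Hp : 0 < x t n) by (apply pos; lia || lra).
    assert (Hx : x t n <= (1 - eps) / a n n) by (apply ln_le_inv; auto).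
    assert (Hal : alpha n a n (x t) <= a n n * x t n + INR n * (A * eta)).
    { apply alpha_le_diag; [intros k Hk; apply HAb; lia|apply xnonneg; lra|lia|lra|].
      intros k Hk Hkn. apply HT2; auto. lia. }
    assert (a n n * x t n <= 1 - eps).
    { replace (1 - eps) with (a n n * ((1 - eps) / a n n)) by (field; lra). apply Rmult_le_compat_l; lra. }
    assert (H4 : INR n * (A * eta) <= eps / 2).
    { assert (0 <= INR n * A * eta) by (apply Rmult_le_pos; lra).
      replace (INR n * (A * eta)) with (INR n * A * eta) by ring. nra. }
    unfold D. apply Rmult_le_compat_l; lra.
  - exists T'. intros t Ht. assert (1 <= t) by (assert (H0 := Rmax_r T2 1); lra).
    apply ln_le_inv; auto. apply pos; lia || lra.
Qed.

Lemma conv : forall i, (1 <= i <= n)%nat -> forall eps, 0 < eps ->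
  exists T, forall t, T <= t -> Rabs (x t i - Yl a n i) < eps.
Proof.
  intros i Hi eps He. unfold Yl. destruct (Nat.eqb_spec i n).
  - subst i. assert (Hnn : 0 < a n n) by (apply Haii; lia).
    set (e0 := Rmin (1/2) (eps * a n n / 2)).
    assert (He0 : 0 < e0) by (apply Rmin_pos; [lra|]; apply Rdiv_lt_0_compat; [apply Rmult_lt_0_compat|]; lra).
    assert (He1 : e0 <= 1/2) by apply Rmin_l. assert (He2 : e0 <= eps * a n n / 2) by apply Rmin_r.
    destruct (upper n Hi e0 He0) as [T1 [_ H1]].
    destruct (xn_lower e0 ltac:(lra)) as [T2 H2].
    exists (Rmax T1 T2). intros t Ht.
    assert (Hu := H1 t ltac:(eapply Rle_trans; [apply Rmax_l|eauto])).
    assert (Hl := H2 t ltac:(eapply Rle_trans; [apply Rmax_r|eauto])).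
    assert (He3 : e0 / a n n <= eps / 2).
    { apply Rmult_le_reg_r with (a n n); auto. replace (e0 / a n n * a n n) with e0 by (field; lra). lra. }
    assert (E1 : (1 + e0) / a n n = / a n n + e0 / a n n) by (field; lra).
    assert (E2 : (1 - e0) / a n n = / a n n - e0 / a n n) by (field; lra).
    apply Rabs_def1; lra.
  - assert (Hi2 : (1 <= i <= n - 1)%nat) by lia.
    destruct (Pall i Hi2 (eps / 2) ltac:(lra)) as [T HT]. exists (Rmax T 0). intros t Ht.
    assert (0 <= t) by (eapply Rle_trans; [apply Rmax_r|eauto]).
    assert (x t i <= eps / 2) by (apply HT; eapply Rle_trans; [apply Rmax_l|eauto]).
    assert (0 < x t i) by (apply pos; auto).
    apply Rabs_def1; lra.
Qed.

End Sol.

Theorem corollary2p13 (n : nat) (a : nat -> nat -> R) (b : nat -> R)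
  (Hn : (2 <= n)%nat)
  (Hb : forall i, (1 <= i <= n)%nat -> 0 < b i)
  (Haii : forall i, (1 <= i <= n)%nat -> 0 < a i i)
  (Haij : forall i j, (1 <= i <= n)%nat -> (1 <= j <= n)%nat -> 0 <= a i j)
  (H1 : forall l j, (1 <= l <= n - 1)%nat -> (l < j <= n)%nat ->
          alpha n a j (Yl a l) < 1)
  (H2 : forall l j, (1 <= l <= n - 1)%nat -> (l < j <= n)%nat ->
          forall y : nat -> R,
            nonneg_orthant n y ->
            alpha n a l y = 1 ->
            (forall k, (1 <= k <= l - 1)%nat -> y k = 0) ->
            alpha n a j y <= 1) :
  global_attractor n a b (Yl a n).
Proof.
  destruct (coef_facts n a Haii Haij H1 H2) as [HD HA].
  split.
  - intros k Hk. unfold Yl. destruct (Nat.eqb k n). left; apply Rinv_0_lt_compat; apply Haii; lia. lra.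
  - intros x Hsol Hx0 i Hi eps He.
    exact (conv n a b x Hb Haii Haij Hsol Hx0 Hn HD HA i Hi eps He).
Qed.
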